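(* Let $K$ be a field and let $\Delta$ be a simplicial complex on the vertex set $V\cup V'$, where $V\cap V'=\emptyset$ and $|V|=|V'|=n$. Suppose that the set $G=\{F\in\mathcal F(\Delta): F\cap V\neq\emptyset,\ F\cap V'\neq\emptyset\}$ is a Cohen--Macaulay bipartite graph (with bipartition $V,V'$) with no isolated vertex. Fix a labeling $V=\{x_1,\dots,x_n\}$, $V'=\{y_1,\dots,y_n\}$ and a partial order $\le$ on $V$ such that $\{x_i,y_j\}$ is an edge of $G$ if and only if $x_i\le x_j$, and let $\mathcal L(G)$ be the distributive lattice of all poset ideals of $(V,\le)$. Then the following are equivalent: (1) $\Delta$ is unmixed, and all minimal vertex covers of $\Delta$ have cardinality $|V|$; (2) there exists a segment $\mathcal S\subseteq\mathcal L(G)$ such that $H_{\mathcal S}^*=I(\Delta)$.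
   Context: $\mathcal F(\Delta)$ denotes the set of facets of $\Delta$. A vertex cover of $\Delta$ is a set of vertices meeting every facet; it is minimal if no proper subset is a vertex cover; $\Delta$ is unmixed if all minimal vertex covers have the same cardinality. Identify vertices with variables of $S=K[x_1,\dots,x_n,y_1,\dots,y_n]$. The facet ideal is $I(\Delta)=(\prod_{v\in F}v : F\in\mathcal F(\Delta))$; for a graph $G$, $I(G)$ is its edge ideal (generated by $uv$ for edges $\{u,v\}$), and $G$ is Cohen--Macaulay if $S/I(G)$ is Cohen--Macaulay (for such $G$ a labeling and partial order as in the claim always exist). $\mathcal L(G)$ consists of all poset ideals of $(V,\le)$ (including $\emptyset$), ordered by inclusion. For $\alpha\in\mathcal L(G)$ put $u_\alpha=\prod_{x_i\in\alpha}x_i\prod_{x_i\notin\alpha}y_i$, and for a subset $\mathcal S\subseteq\mathcal L(G)$ let $H_{\mathcal S}$ be the ideal of $S$ generated by $\{u_\alpha:\alpha\in\mathcal S\}$. A subset $\mathcal S$ of a lattice is a segment if for all $p,q\in\mathcal S$ with $p\le q$ the interval $[p,q]=\{r: p\le r\le q\}$ is contained in $\mathcal S$. For a squarefree monomial ideal $I=I_\Gamma$ (Stanley--Reisner ideal of a simplicial complex $\Gamma$ on the vertex set $W=V\cup V'$), $I^*:=I_{\Gamma^\vee}$, where $\Gamma^\vee=\{W\setminus F: F\notin\Gamma\}$ is the Alexander dual. *)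

(* Defs.v *)
From HB Require Import structures.
From mathcomp Require Import all_boot all_order all_algebra.
From mathcomp Require Import mpoly.

Set Implicit Arguments.
Unset Strict Implicit.
Unset Printing Implicit Defensive.

Import GRing.Theory.
Local Open Scope ring_scope.

Definition simplicial_complex (m : nat) (D : {set {set 'I_m}}) : Prop :=
  forall F G : {set 'I_m}, F \in D -> G \subset F -> G \in D.

Definition facets (m : nat) (D : {set {set 'I_m}}) : {set {set 'I_m}} :=
  [set F in D | [forall G in D, (F \subset G) ==> (G == F)]].

Definition vertex_cover (m : nat) (D : {set {set 'I_m}}) (C : {set 'I_m}) : Prop :=
  forall F, F \in facets D -> ~~ [disjoint C & F].

Definition minimal_vertex_cover (m : nat) (D : {set {set 'I_m}}) (C : {set 'I_m}) : Prop :=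
  vertex_cover D C /\ forall C' : {set 'I_m}, C' \proper C -> ~ vertex_cover D C'.

Definition unmixed (m : nat) (D : {set {set 'I_m}}) : Prop :=
  forall C1 C2, minimal_vertex_cover D C1 -> minimal_vertex_cover D C2 ->
    #|C1| = #|C2|.

Definition sqmono (K : fieldType) (m : nat) (A : {set 'I_m}) : {mpoly K[m]} :=
  \prod_(v in A) 'X_v.

Definition mono_ideal (K : fieldType) (m : nat) (Gs : {set {set 'I_m}})
  (p : {mpoly K[m]}) : Prop :=
  exists f : {set 'I_m} -> {mpoly K[m]}, p = \sum_(A in Gs) f A * @sqmono K m A.

Definition facet_ideal (K : fieldType) (m : nat) (D : {set {set 'I_m}}) :=
  @mono_ideal K m (facets D).

Definition SR_ideal (K : fieldType) (m : nat) (Gam : {set {set 'I_m}}) :=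
  @mono_ideal K m (~: Gam).

Definition alexander_dual (m : nat) (Gam : {set {set 'I_m}}) : {set {set 'I_m}} :=
  [set ~: F | F in ~: Gam].

Definition partial_order (n : nat) (le : rel 'I_n) : Prop :=
  reflexive le /\ antisymmetric le /\ transitive le.

Definition poset_ideal (n : nat) (le : rel 'I_n) (a : {set 'I_n}) : Prop :=
  forall i j, le i j -> j \in a -> i \in a.

Definition segment (n : nat) (le : rel 'I_n) (S : {set {set 'I_n}}) : Prop :=
  (forall a, a \in S -> poset_ideal le a) /\
  forall p q r, p \in S -> q \in S -> p \subset q ->
    poset_ideal le r -> p \subset r -> r \subset q -> r \in S.

Definition xv (n : nat) (i : 'I_n) : 'I_(n + n) := lshift n i.
Definition yv (n : nat) (i : 'I_n) : 'I_(n + n) := rshift n i.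

Definition Vset (n : nat) : {set 'I_(n + n)} := [set xv i | i : 'I_n].
Definition V'set (n : nat) : {set 'I_(n + n)} := [set yv i | i : 'I_n].

(* support of u_alpha = prod_{x_i in alpha} x_i prod_{x_i notin alpha} y_i *)
Definition u_supp (n : nat) (a : {set 'I_n}) : {set 'I_(n + n)} :=
  [set xv i | i in a] :|: [set yv i | i in ~: a].

Definition H_gens (n : nat) (S : {set {set 'I_n}}) : {set {set 'I_(n + n)}} :=
  [set u_supp a | a in S].

Definition H_ideal (K : fieldType) (n : nat) (S : {set {set 'I_n}}) :=
  @mono_ideal K (n + n) (H_gens S).

(* Main.v *)
Require Import Defs.
From HB Require Import structures.
From mathcomp Require Import all_boot all_order all_algebra.
From mathcomp Require Import mpoly.
From mathcomp Require Import zify.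

Set Implicit Arguments.
Unset Strict Implicit.
Unset Printing Implicit Defensive.
Import GRing.Theory.
Lemma ndisjP (T : finType) (A B : {set T}) :
  ~~ [disjoint A & B] -> exists2 z, z \in A & z \in B.
Proof. by rewrite -setI_eq0 => /set0Pn [z]; rewrite inE => /andP[]; exists z. Qed.

Lemma ndisjI (T : finType) (A B : {set T}) z : z \in A -> z \in B -> ~~ [disjoint A & B].
Proof.
move=> zA zB; apply/negP; rewrite -setI_eq0 => /eqP e.
have zI : z \in A :&: B by rewrite inE zA zB.
by rewrite e inE in zI.
Qed.

Section Mono.
Variables (K : fieldType) (m : nat).
Local Open Scope ring_scope.

Lemma sqmono_split (A G : {set 'I_m}) : G \subset A ->
  @sqmono K m A = sqmono K (A :\: G) * sqmono K G.
Proof.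
move=> GA; rewrite /sqmono (bigID (mem G)) /= mulrC; congr (_ * _).
  by apply: eq_bigl => v; rewrite !inE andbC.
apply: eq_bigl => v; case vG: (v \in G); rewrite ?andbT ?andbF //=.
by rewrite (subsetP GA).
Qed.

Lemma mono_sub (A B : {set {set 'I_m}}) :
  (forall F, F \in A -> exists G, G \in B /\ G \subset F) ->
  forall p : {mpoly K[m]}, mono_ideal A p -> mono_ideal B p.
Proof.
move=> H p [f ->].
pose c (F : {set 'I_m}) := odflt set0 [pick G in B | G \subset F].
have cP F : F \in A -> c F \in B /\ c F \subset F.
  move=> FA; rewrite /c; case: pickP => [G /andP[]| /= none] //.
  by have [G [GB GF]] := H F FA; have := none G; rewrite GB GF.
exists (fun G => \sum_(F in A | c F == G) f F * sqmono K (F :\: G)).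
rewrite (partition_big c (mem B)); last by move=> F /cP [].
apply: eq_bigr => G GB; rewrite mulr_suml; apply: eq_bigr => F /andP[FA /eqP <-].
by rewrite -mulrA -sqmono_split //; case: (cP F FA).
Qed.

Lemma mono_sub_inv (A B : {set {set 'I_m}}) :
  (forall p : {mpoly K[m]}, mono_ideal A p -> mono_ideal B p) ->
  forall F, F \in A -> exists G, G \in B /\ G \subset F.
Proof.
move=> H F FA.
have : mono_ideal A (sqmono K F).
  exists (fun X => if X == F then 1 else 0).
  rewrite (bigD1 F) //= eqxx mul1r big1 ?addr0 // => X /andP[_ /negbTE ->].
  by rewrite mul0r.
case/H => g Hg.
case: (boolP [exists G in B, G \subset F]) => [/exists_inP[G ? ?]|]; first by exists G.
rewrite negb_exists_in => /forall_inP nsub.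
pose v := fun i : 'I_m => if i \in F then (1:K) else 0.
have := congr1 (meval v) Hg.
rewrite rmorph_sum /= big1; last first.
  move=> G GB; rewrite mevalM /sqmono rmorph_prod /=.
  have /subsetPn [i iG iF] := nsub G GB.
  by rewrite (bigD1 i) //= mevalXU /v (negbTE iF) mul0r mulr0.
rewrite /sqmono rmorph_prod /= big1 ?oner_eq0 //.
  by move=> /eqP; rewrite oner_eq0.
by move=> i iF; rewrite mevalXU /v iF.
Qed.

End Mono.
Section Cover.
Variable m : nat.
Implicit Types (D : {set {set 'I_m}}) (C : {set 'I_m}).

Definition vcb D C := [forall F in facets D, ~~ [disjoint C & F]].
Lemma vcP D C : reflect (vertex_cover D C) (vcb D C).
Proof. exact: forall_inP. Qed.

Definition mvcb D C := vcb D C && [forall C' : {set 'I_m}, (C' \proper C) ==> ~~ vcb D C'].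
Lemma mvcP D C : reflect (minimal_vertex_cover D C) (mvcb D C).
Proof.
apply: (iffP andP) => [[/vcP h /forallP h2]|[h h2]]; split => //.
  by move=> C' /(implyP (h2 C')) /vcP.
  exact/vcP.
apply/forallP => C'; apply/implyP => /h2 h3; exact/vcP.
Qed.

Lemma exists_mvc D C : vertex_cover D C ->
  exists2 C0, minimal_vertex_cover D C0 & C0 \subset C.
Proof.
move: {2}#|C|.+1 (ltnSn #|C|) => k; elim: k C => // k IH C lt vc.
case: (boolP (mvcb D C)) => [/mvcP h|]; first by exists C.
rewrite /mvcb (introT (vcP _ _) vc) /= negb_forall => /existsP [C'].
rewrite negb_imply negbK => /andP [pr /vcP vc'].
have [C0 h sub] := IH C' (leq_trans (proper_card pr) lt) vc'.
exists C0 => //; exact: subset_trans sub (proper_sub pr).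
Qed.
End Cover.

Section Bip.
Variable n : nat.

Lemma xv_neq_yv (i j : 'I_n) : xv i != yv j.
Proof.
apply/eqP => /(congr1 val) /=; have := ltn_ord i; lia.
Qed.

Lemma xv_inj : injective (@xv n). Proof. exact: lshift_inj. Qed.
Lemma yv_inj : injective (@yv n). Proof. exact: rshift_inj. Qed.

Lemma in_u_supp_x (a : {set 'I_n}) i : (xv i \in u_supp a) = (i \in a).
Proof.
rewrite inE (mem_imset _ _ xv_inj).
case: (i \in a) => //=; apply/negbTE/negP; case/imsetP => j _ /eqP; by rewrite (negbTE (xv_neq_yv _ _)).
Qed.

Lemma in_u_supp_y (a : {set 'I_n}) i : (yv i \in u_supp a) = (i \notin a).
Proof.
rewrite inE (mem_imset _ _ yv_inj) inE.
rewrite orbC; case: (i \in a) => //=; apply/negbTE/negP; case/imsetP => j _ /eqP; by rewrite eq_sym (negbTE (xv_neq_yv _ _)).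
Qed.

Lemma card_u_supp (a : {set 'I_n}) : #|u_supp a| = n.
Proof.
rewrite cardsU (card_imset _ xv_inj) (card_imset _ yv_inj).
have -> : [set xv i | i in a] :&: [set yv i | i in ~: a] = set0.
  apply/setP => z; rewrite inE in_set0; apply/negbTE/negP => /andP [/imsetP [i _ ->] /imsetP [j _ /eqP]].
  by rewrite (negbTE (xv_neq_yv _ _)).
by rewrite cards0 subn0 cardsC card_ord.
Qed.

Lemma card_Vset : #|Vset n| = n.
Proof. by rewrite /Vset (card_imset _ xv_inj) cardT size_enum_ord. Qed.

End Bip.
Lemma xv_in_V n (i : 'I_n) : xv i \in Vset n.
Proof. by apply/imsetP; exists i. Qed.
Lemma yv_in_V' n (i : 'I_n) : yv i \in V'set n.
Proof. by apply/imsetP; exists i. Qed.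

Lemma in_adual m (Gam : {set {set 'I_m}}) G :
  (G \in alexander_dual Gam) = (~: G \notin Gam).
Proof.
apply/imsetP/idP => [[F FG ->]|h]; first by rewrite setCK -in_setC.
by exists (~: G); [rewrite in_setC | rewrite setCK].
Qed.

Unset Implicit Arguments.
Theorem theorem2p4 (K : fieldType) (n : nat) (le : rel 'I_n)
    (Delta : {set {set 'I_(n + n)}}) :
  partial_order le ->
  simplicial_complex Delta ->
  (forall F : {set 'I_(n + n)},
      (F \in facets Delta /\ ~~ [disjoint F & Vset n] /\ ~~ [disjoint F & V'set n])
      <-> exists i j : 'I_n, le i j /\ F = [set xv i; yv j]) ->
  ((unmixed Delta /\
      forall C, minimal_vertex_cover Delta C -> #|C| = #|Vset n|)
   <->
   exists S : {set {set 'I_n}},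
     segment le S /\
     exists Gam : {set {set 'I_(n + n)}},
       simplicial_complex Gam /\
       (forall p, @SR_ideal K (n + n) Gam p <-> @H_ideal K n S p) /\
       (forall p, @SR_ideal K (n + n) (alexander_dual Gam) p <-> @facet_ideal K (n + n) Delta p)).
Proof.
move=> [lerefl [_ _]] scD Hedge.
have efac i j : le i j -> [set xv i; yv j] \in facets Delta.
  by move=> lij; case: ((Hedge _).2 (ex_intro _ i (ex_intro _ j (conj lij erefl)))).
have cov2 C i j : vertex_cover Delta C -> le i j -> (xv i \in C) || (yv j \in C).
  move=> vc lij; have /ndisjP [z zC] := vc _ (efac i j lij).
  by rewrite !inE => /orP [] /eqP zE; rewrite -zE zC ?orbT.
have sub_u C : vertex_cover Delta C -> u_supp [set i | xv i \in C] \subset C.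
  move=> vc; apply/subsetP => z; rewrite inE => /orP [] /imsetP [i]; rewrite !inE => hi ->//.
  by have := cov2 C i i vc (lerefl i); rewrite (negbTE hi).
have min_u C a : vertex_cover Delta C -> C \subset u_supp a -> u_supp a \subset C.
  move=> vc sub; apply/subsetP => z; rewrite inE => /orP [] /imsetP [i]; rewrite ?inE => hi ->.
    have := cov2 C i i vc (lerefl i); case/orP => [//|/(subsetP sub)].
    by rewrite in_u_supp_y hi.
  have := cov2 C i i vc (lerefl i); case/orP => [/(subsetP sub)|//].
  by rewrite in_u_supp_x (negbTE hi).
split.
- case=> _ Hcard.
  have mvc_u C : minimal_vertex_cover Delta C -> C = u_supp [set i | xv i \in C].
    move=> mC; have [vc _] := mC; apply/esym/eqP.
    by rewrite eqEcard sub_u // card_u_supp (Hcard C mC) card_Vset leqnn.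
  pose S := [set a : {set 'I_n} | mvcb Delta (u_supp a)].
  pose Gam := [set G : {set 'I_(n+n)} | [forall a in S, ~~ (u_supp a \subset G)]].
  exists S. split.
  + split.
    * move=> a; rewrite inE => /mvcP [vc _] i j lij ja.
      by have := cov2 _ i j vc lij; rewrite in_u_supp_x in_u_supp_y ja orbF.
    * move=> p q r; rewrite !inE => /mvcP [vp _] /mvcP [vq _] _ pir pr rq.
      have vr : vertex_cover Delta (u_supp r).
        move=> F FF.
        case: (boolP [disjoint F & Vset n]) => dV.
          have /ndisjP [z] := vq F FF; rewrite inE => /orP [] /imsetP [k]; rewrite ?inE => kq -> kF.
            by move: (ndisjI kF (xv_in_V k)); rewrite dV.
          apply: (ndisjI (z := yv k)) => //; rewrite in_u_supp_y.
          by apply: contra kq; apply: (subsetP rq).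
        case: (boolP [disjoint F & V'set n]) => dV'.
          have /ndisjP [z] := vp F FF; rewrite inE => /orP [] /imsetP [k]; rewrite ?inE => kp -> kF.
            apply: (ndisjI (z := xv k)) => //; rewrite in_u_supp_x.
            exact: (subsetP pr).
          by move: (ndisjI kF (yv_in_V' k)); rewrite dV'.
        have [i [j [lij ->]]] := (Hedge F).1 (conj FF (conj dV dV')).
        case jr: (j \in r).
          apply: (ndisjI (z := xv i)); first by rewrite in_u_supp_x; exact: pir lij jr.
          by rewrite !inE eqxx.
        apply: (ndisjI (z := yv j)); first by rewrite in_u_supp_y jr.
        by rewrite !inE eqxx orbT.
      apply/mvcP; split => // C' pC' vC'.
      have h := min_u _ _ vC' (proper_sub pC').
      by move: pC'; rewrite properE h andbF.
  + exists Gam; split; [|split].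
    * move=> F G; rewrite !inE => /forall_inP H sub; apply/forall_inP => a aS.
      by apply: contra (H a aS) => h; exact: subset_trans h sub.
    * move=> p; split; apply: mono_sub => F.
      - rewrite in_setC inE negb_forall_in => /exists_inP [a aS sub].
        by exists (u_supp a); split; [rewrite /H_gens; apply: imset_f | exact/negPn].
      - case/imsetP => a aS ->; exists (u_supp a); split; last exact: subxx.
        by rewrite in_setC inE negb_forall_in; apply/exists_inP; exists a; rewrite ?negbK.
    * have memD G : (G \in ~: alexander_dual Gam) = [forall a in S, ~~ [disjoint u_supp a & G]].
        rewrite in_setC in_adual negbK inE; apply: eq_forallb => a.
        by rewrite -disjoints_subset.
      move=> p; split; apply: mono_sub => F.
      - rewrite memD => /forall_inP hF.
        case: (boolP [exists G in facets Delta, G \subset F]) => [/exists_inP [G GF sub]|].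
          by exists G.
        rewrite negb_exists_in => /forall_inP nsub.
        have vc : vertex_cover Delta (~: F).
          move=> G GF; have /subsetPn [z zG zF] := nsub G GF.
          by apply: (ndisjI (z:=z)) => //; rewrite inE.
        have [C0 mC0 sub] := exists_mvc vc.
        have a0S : [set i | xv i \in C0] \in S by rewrite inE -mvc_u //; exact/mvcP.
        by have := hF _ a0S; rewrite -mvc_u // disjoints_subset sub.
      - move=> FF; exists F; split; last exact: subxx.
        rewrite memD; apply/forall_inP => a; rewrite inE => /mvcP [vc _]; exact: vc.
- case=> S [_ [Gam [scG [H1 H2]]]].
  have H1a := mono_sub_inv (fun p => (H1 p).1).
  have H1b := mono_sub_inv (fun p => (H1 p).2).
  have H2a := mono_sub_inv (fun p => (H2 p).1).
  have H2b := mono_sub_inv (fun p => (H2 p).2).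
  have notG F : (F \notin Gam) = [exists a in S, u_supp a \subset F].
    apply/idP/exists_inP.
      move=> FG; have FG' : F \in ~: Gam by rewrite in_setC.
      have [G' [/imsetP [a aS ->] sub]] := H1a F FG'.
      by exists a.
    case=> a aS sub; apply/negP => FG.
    have [G' [G'G sub']] := H1b (u_supp a) (imset_f _ aS).
    rewrite in_setC in G'G; have := scG _ _ FG (subset_trans sub' sub).
    by rewrite (negbTE G'G).
  have memD G : (G \in ~: alexander_dual Gam) = [forall a in S, ~~ [disjoint u_supp a & G]].
    rewrite in_setC in_adual negbK -[~: G \in Gam]negbK notG negb_exists_in.
    by apply: eq_forallb => a; rewrite disjoints_subset.
  have vcE C : vertex_cover Delta C <-> exists2 a, a \in S & u_supp a \subset C.
    split.
      move=> vc; case: (boolP [exists a in S, u_supp a \subset C]) => [/exists_inP [a ? ?]|].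
        by exists a.
      rewrite negb_exists_in => /forall_inP h.
      have : ~: C \in ~: alexander_dual Gam.
        by rewrite memD; apply/forall_inP => a aS; rewrite disjoints_subset setCK; exact: h.
      case/H2a => G [GF sub]. have /ndisjP [z zC zG] := vc G GF.
      by have := subsetP sub z zG; rewrite inE zC.
    case=> a aS sub F FF. have [G' [G'D sub']] := H2b F FF.
    rewrite memD in G'D; have /ndisjP [z za zG'] := (forall_inP G'D) a aS.
    by apply: (ndisjI (z:=z)); [exact: (subsetP sub z za) | exact: (subsetP sub' z zG')].
  have mvc C : minimal_vertex_cover Delta C -> exists2 a, a \in S & C = u_supp a.
    case=> vc mn; have [a aS sub] := (vcE C).1 vc; exists a => //.
    case: (eqVneq (u_supp a) C) => [->//|ne]; exfalso.
    apply: (mn (u_supp a)); first by rewrite properEneq ne sub.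
    by apply/vcE; exists a.
  split.
  + by move=> C1 C2 /mvc [a _ ->] /mvc [b _ ->]; rewrite !card_u_supp.
  + by move=> C /mvc [a _ ->]; rewrite card_u_supp card_Vset.
Qed.
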